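(* Let $(\mathcal E,B,\mathcal L_{\mathcal P})$ be an epistemic space and $\mathcal S$ a set of agents. An ES combination operator $\nabla$ is an ES basic fusion operator if and only if there exists a unique basic assignment $\Phi\mapsto\succeq_\Phi$ such that for every profile $\Phi$ and every $E\in\mathcal E$, $$[\![B(\nabla(\Phi,E))]\!]=\max\big([\![B(E)]\!],\succeq_\Phi\big).$$
   Context: $\mathcal L_{\mathcal P}$ is the set of propositional formulas over a finite set $\mathcal P$ of variables, $\mathcal W_{\mathcal P}$ its set of valuations, $[\![\phi]\!]$ the set of models of $\phi$. An epistemic space is a triple $(\mathcal E,B,\mathcal L_{\mathcal P})$ with $\mathcal E$ a nonempty set and $B:\mathcal E\to\mathcal L_{\mathcal P}$ whose image modulo logical equivalence is exactly the set of consistent formulas modulo equivalence. Agents form a well-ordered set $(\mathcal S,<)$; a society is a nonempty finite $N\subseteq\mathcal S$; an $N$-profile is a function $\Phi:N\to\mathcal E$, $E_i:=\Phi(i)$; for $N=\{i\}$ it is identified with $E_i$. Profiles $\Phi$ on $N=\{i_1<\dots<i_n\}$ and $\Psi$ on $M=\{j_1<\dots<j_m\}$ are equivalent, $\Phi\equiv\Psi$, if $n=m$ and $\Phi(i_k)=\Psi(j_k)$ for all $k$. An ES combination operator $\nabla$ assigns to every profile $\Phi$ and every $E\in\mathcal E$ an element $\nabla(\Phi,E)\in\mathcal E$. It is an ES basic fusion operator if for all profiles $\Phi,\Phi'$ and $E,E',E''$: (ESF1) $B(\nabla(\Phi,E))\vdash B(E)$; (ESF2) if $\Phi\equiv\Phi'$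 and $B(E)\equiv B(E')$ then $B(\nabla(\Phi,E))\equiv B(\nabla(\Phi',E'))$; (ESF3) if $B(E)\equiv B(E')\wedge B(E'')$ then $B(\nabla(\Phi,E'))\wedge B(E'')\vdash B(\nabla(\Phi,E))$; (ESF4) if $B(E)\equiv B(E')\wedge B(E'')$ and $B(\nabla(\Phi,E'))\wedge B(E'')\nvdash\bot$ then $B(\nabla(\Phi,E))\vdash B(\nabla(\Phi,E'))\wedge B(E'')$. An assignment maps each profile $\Phi$ to a total preorder $\succeq_\Phi$ on $\mathcal W_{\mathcal P}$; it is basic if $\Phi\equiv\Psi$ implies $\succeq_\Phi=\succeq_\Psi$. For a total preorder $\succeq$ and set $C$, $\max(C,\succeq)=\{c\in C:\ c\succeq x\text{ for all }x\in C\}$. *)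

(* Defs.v *)
From HB Require Import structures.
From mathcomp Require Import all_boot all_order.
Set Implicit Arguments. Unset Strict Implicit. Unset Printing Implicit Defensive.
Import Order.TTheory.
Local Open Scope order_scope.

Inductive form (V : Type) : Type :=
| FVar of V
| FTop | FBot
| FNeg of form V
| FAnd of form V & form V
| FOr of form V & form V
| FImp of form V & form V.
Arguments FTop {V}. Arguments FBot {V}.

Definition valuation (V : finType) := {ffun V -> bool}.

Fixpoint eval (V : finType) (w : valuation V) (f : form V) : bool :=
  match f with
  | FVar x => w x
  | FTop => true
  | FBot => false
  | FNeg g => ~~ eval w g
  | FAnd g h => eval w g && eval w h
  | FOr g h => eval w g || eval w h
  | FImp g h => eval w g ==> eval w h
  end.

Definition models (V : finType) (f : form V) : {set valuation V} :=
  [set w | eval w f].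

Definition entails (V : finType) (f g : form V) : Prop :=
  forall w : valuation V, eval w f -> eval w g.
Definition fequiv (V : finType) (f g : form V) : Prop :=
  entails f g /\ entails g f.
Definition consistent (V : finType) (f : form V) : Prop := ~ entails f FBot.

(* (E, B, L_P) is an epistemic space: E nonempty, and the image of B modulo
   logical equivalence is exactly the set of consistent formulas modulo
   equivalence. *)
Definition epistemic_space (V : finType) (E : Type) (B : E -> form V) : Prop :=
  inhabited E /\
  (forall e, consistent (B e)) /\
  (forall f : form V, consistent f -> exists e, fequiv (B e) f).

(* Agents form a well-ordered set (S, <): S is a totally ordered type whose
   strict order is well-founded (hypothesis in the theorem). A society is a
   nonempty finite subset N of S, represented by the strictly increasing
   enumeration of its elements; a profile is a function N -> E. *)
Record profile (d : Order.disp_t) (S : orderType d) (E : Type) := Profile {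
  soc : seq S;
  soc_sorted : sorted <%O soc;
  soc_nonempty : soc != [::];
  pval : forall x : S, x \in soc -> E
}.

(* Phi on {i_1<...<i_n} and Psi on {j_1<...<j_m} are equivalent iff n = m and
   Phi(i_k) = Psi(j_k) for all k. *)
Definition prof_equiv d (S : orderType d) E (Phi Psi : profile S E) : Prop :=
  size (soc Phi) = size (soc Psi) /\
  forall k, k < size (soc Phi) ->
  forall (x : S) (hx : x \in soc Phi) (y : S) (hy : y \in soc Psi),
    x = nth x (soc Phi) k -> y = nth y (soc Psi) k ->
    pval hx = pval hy.

Definition ES_basic_fusion d (S : orderType d) (V : finType) (E : Type)
  (B : E -> form V) (nabla : profile S E -> E -> E) : Prop :=
  (forall Phi e, entails (B (nabla Phi e)) (B e)) /\
  (forall Phi Phi' e e', prof_equiv Phi Phi' -> fequiv (B e) (B e') ->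
     fequiv (B (nabla Phi e)) (B (nabla Phi' e'))) /\
  (forall Phi e e' e'', fequiv (B e) (FAnd (B e') (B e'')) ->
     entails (FAnd (B (nabla Phi e')) (B e'')) (B (nabla Phi e))) /\
  (forall Phi e e' e'', fequiv (B e) (FAnd (B e') (B e'')) ->
     consistent (FAnd (B (nabla Phi e')) (B e'')) ->
     entails (B (nabla Phi e)) (FAnd (B (nabla Phi e')) (B e''))).

Definition total_preorder (T : Type) (R : T -> T -> Prop) : Prop :=
  (forall x y, R x y \/ R y x) /\ (forall x y z, R x y -> R y z -> R x z).

Definition assignment d (S : orderType d) (V : finType) (E : Type)
  (A : profile S E -> valuation V -> valuation V -> Prop) : Prop :=
  forall Phi, total_preorder (A Phi).

Definition basic_assignment d (S : orderType d) (V : finType) (E : Type)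
  (A : profile S E -> valuation V -> valuation V -> Prop) : Prop :=
  assignment A /\
  forall Phi Psi, prof_equiv Phi Psi -> forall w w', A Phi w w' <-> A Psi w w'.

Definition maxset (V : finType) (C : {set valuation V})
  (R : valuation V -> valuation V -> Prop) : valuation V -> Prop :=
  fun c => c \in C /\ forall x, x \in C -> R c x.

Definition represents d (S : orderType d) (V : finType) (E : Type)
  (B : E -> form V) (nabla : profile S E -> E -> E)
  (A : profile S E -> valuation V -> valuation V -> Prop) : Prop :=
  forall Phi e w,
    w \in models (B (nabla Phi e)) <-> maxset (models (B e)) (A Phi) w.

(* Main.v *)
Require Import Defs.
From HB Require Import structures.
From mathcomp Require Import all_boot all_order.
From Stdlib Require Import Setoid.
Set Warnings "-notation-overridden".
Set Implicit Arguments. Unset Strict Implicit. Unset Printing Implicit Defensive.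

Definition minterm (V : finType) (w : valuation V) : form V :=
  foldr (fun x f => FAnd (if w x then FVar x else FNeg (FVar x)) f) FTop (enum V).

Lemma eval_minterm (V : finType) (v w : valuation V) : eval v (minterm w) = (v == w).
Proof.
have H : forall s, eval v (foldr (fun x f => FAnd (if w x then FVar x else FNeg (FVar x)) f) FTop s)
   = all (fun x => v x == w x) s.
  elim=> [//|x s IH] /=; rewrite IH; congr (_ && _).
  by case: (w x) => /=; case: (v x).
rewrite /minterm H; apply/allP/eqP => [Hx|-> //].
by apply/ffunP => x; apply/eqP/Hx; rewrite mem_enum.
Qed.

Definition setform (V : finType) (C : {set valuation V}) : form V :=
  foldr (fun w f => FOr (minterm w) f) FBot (enum C).

Lemma eval_setform (V : finType) (C : {set valuation V}) v : eval v (setform C) = (v \in C).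
Proof.
have H : forall s, eval v (foldr (fun w f => FOr (minterm w) f) FBot s) = (v \in s).
  by elim=> [//|x s IH] /=; rewrite IH eval_minterm in_cons.
by rewrite /setform H mem_enum.
Qed.

Lemma fequivP (V : finType) (f g : form V) : fequiv f g <-> models f = models g.
Proof.
split=> [[H1 H2]|H].
  by apply/setP => w; rewrite !inE; apply/idP/idP; [apply: H1|apply: H2].
split=> w Hw.
  have : w \in models f by rewrite inE.
  by rewrite H inE.
have : w \in models g by rewrite inE.
by rewrite -H inE.
Qed.

Lemma entailsP (V : finType) (f g : form V) : entails f g <-> models f \subset models g.
Proof.
split=> [H|H w Hw].
  by apply/subsetP => w; rewrite !inE; apply: H.
have : w \in models f by rewrite inE.
by move/(subsetP H); rewrite inE.
Qed.

Lemma consistentP (V : finType) (f : form V) : consistent f <-> models f != set0.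
Proof.
split=> [H|H].
  apply/set0Pn; case: (boolP [exists w, eval w f]) => [/existsP [w Hw]|Hn].
    by exists w; rewrite inE.
  exfalso; apply: H => w Hw; case/negP: Hn; apply/existsP; by exists w.
move=> Hb; case/set0Pn: H => w; rewrite inE => /Hb.
done.
Qed.

Lemma models_and (V : finType) (f g : form V) : models (FAnd f g) = models f :&: models g.
Proof. by apply/setP => w; rewrite !inE. Qed.

Lemma ex_e (V : finType) (E : Type) (B : E -> form V) (hES : epistemic_space B)
  (C : {set valuation V}) : C != set0 -> exists e, models (B e) = C.
Proof.
move=> HC; case: hES => _ [_ H].
have [e He] : exists e, fequiv (B e) (setform C).
  apply: H; apply/consistentP.
  case/set0Pn: HC => w Hw; apply/set0Pn; exists w; by rewrite inE eval_setform.
exists e; move/fequivP: He => ->.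
by apply/setP => w; rewrite inE eval_setform.
Qed.

Lemma prof_equiv_refl d (S : orderType d) E (Phi : profile S E) : prof_equiv Phi Phi.
Proof.
split=> // k Hk x hx y hy Hx Hy.
have exy : y = x by rewrite Hy (set_nth_default x) // -Hx.
subst y; by rewrite (eq_irrelevance hx hy).
Qed.
Definition Aof d (S : orderType d) (V : finType) (E : Type) (B : E -> form V)
  (nabla : profile S E -> E -> E) (Phi : profile S E) (w w' : valuation V) : Prop :=
  forall e, models (B e) = [set w; w'] -> w \in models (B (nabla Phi e)).

Lemma pairE (V : finType) (E : Type) (B : E -> form V) (hES : epistemic_space B)
  (w w' : valuation V) : exists e, models (B e) = [set w; w'].
Proof. apply: ex_e => //; apply/set0Pn; exists w; by rewrite !inE eqxx. Qed.

Lemma nab_ne d (S : orderType d) (V : finType) (E : Type) (B : E -> form V)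
  (hES : epistemic_space B) (nabla : profile S E -> E -> E) Phi e :
  models (B (nabla Phi e)) != set0.
Proof. apply/consistentP; exact: hES.2.1. Qed.

Lemma F1sub d (S : orderType d) (V : finType) (E : Type) (B : E -> form V)
  (nabla : profile S E -> E -> E) (hF : ES_basic_fusion B nabla) Phi e w :
  w \in models (B (nabla Phi e)) -> w \in models (B e).
Proof. move=> Hw; have := hF.1 Phi e; move/entailsP/subsetP; exact. Qed.

Lemma red d (S : orderType d) (V : finType) (E : Type) (B : E -> form V)
  (nabla : profile S E -> E -> E) (hF : ES_basic_fusion B nabla) Phi eC eD :
  models (B eD) \subset models (B eC) ->
  models (B (nabla Phi eC)) :&: models (B eD) != set0 ->
  models (B (nabla Phi eD)) = models (B (nabla Phi eC)) :&: models (B eD).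
Proof.
case: hF => [F1 [F2 [F3 F4]]] Hsub Hne.
have Heq : fequiv (B eD) (FAnd (B eC) (B eD)).
  by apply/fequivP; rewrite models_and (setIidPr Hsub).
apply/eqP; rewrite eqEsubset; apply/andP; split.
  rewrite -models_and; apply/entailsP; apply: F4 => //.
  by apply/consistentP; rewrite models_and.
rewrite -models_and; apply/entailsP; exact: F3.
Qed.

Lemma Aof_iff d (S : orderType d) (V : finType) (E : Type) (B : E -> form V)
  (nabla : profile S E -> E -> E) (hF : ES_basic_fusion B nabla) Phi w w' e :
  models (B e) = [set w; w'] ->
  Aof B nabla Phi w w' <-> w \in models (B (nabla Phi e)).
Proof.
move=> He; split=> [H|H e2 He2]; first exact: H.
have H2 : fequiv (B e) (B e2) by apply/fequivP; rewrite He He2.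
have /fequivP <- := hF.2.1 Phi Phi e e2 (prof_equiv_refl Phi) H2; exact: H.
Qed.

Lemma down d (S : orderType d) (V : finType) (E : Type) (B : E -> form V)
  (hES : epistemic_space B)
  (nabla : profile S E -> E -> E) (hF : ES_basic_fusion B nabla) Phi eC x y :
  x \in models (B (nabla Phi eC)) -> y \in models (B eC) -> Aof B nabla Phi x y.
Proof.
move=> Hx Hy; have [ep Hep] := pairE hES x y.
apply/(Aof_iff hF _ Hep).
have Hsub : models (B ep) \subset models (B eC).
  apply/subsetP => z; rewrite Hep => /set2P [->|->] //.
  exact: (F1sub hF Hx).
rewrite (red hF Hsub); first by rewrite inE Hx Hep !inE eqxx.
apply/set0Pn; exists x; by rewrite inE Hx Hep !inE eqxx.
Qed.

Lemma lift d (S : orderType d) (V : finType) (E : Type) (B : E -> form V)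
  (hES : epistemic_space B)
  (nabla : profile S E -> E -> E) (hF : ES_basic_fusion B nabla) Phi eC x y :
  y \in models (B (nabla Phi eC)) -> x \in models (B eC) -> Aof B nabla Phi x y ->
  x \in models (B (nabla Phi eC)).
Proof.
move=> Hy Hx HA; have [ep Hep] := pairE hES x y.
have Hsub : models (B ep) \subset models (B eC).
  apply/subsetP => z; rewrite Hep => /set2P [->|->] //.
  exact: (F1sub hF Hy).
move/(Aof_iff hF _ Hep): HA; rewrite (red hF Hsub); first by case/setIP.
apply/set0Pn; exists y; by rewrite inE Hy Hep !inE eqxx orbT.
Qed.

Theorem theorem1 (d : Order.disp_t) (S : orderType d)
  (wfS : well_founded (fun x y : S => (x < y)%O))
  (V : finType) (E : Type) (B : E -> form V)
  (hES : epistemic_space B)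
  (nabla : profile S E -> E -> E) :
  ES_basic_fusion B nabla <->
  exists A : profile S E -> valuation V -> valuation V -> Prop,
    (basic_assignment A /\ represents B nabla A) /\
    (forall A' : profile S E -> valuation V -> valuation V -> Prop,
       basic_assignment A' -> represents B nabla A' ->
       forall Phi w w', A' Phi w w' <-> A Phi w w').
Proof.
split=> [hF|[A [[[assn inv] rep] _]]].
  exists (Aof B nabla); split; [split; [split|]|].
  - move=> Phi; split.
      move=> x y; have [ep Hep] := pairE hES x y.
      case/set0Pn: (nab_ne hES nabla Phi ep) => m Hm.
      have := F1sub hF Hm; rewrite Hep => /set2P [Em|Em]; subst m.
        by left; apply: (down hES hF Hm); rewrite Hep !inE eqxx orbT.
      by right; apply: (down hES hF Hm); rewrite Hep !inE eqxx.
    move=> x y z Hxy Hyz.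
    have [et Het] : exists e, models (B e) = [set x; y; z].
      by apply: ex_e => //; apply/set0Pn; exists x; rewrite !inE eqxx.
    have Hxi : x \in models (B et) by rewrite Het !inE eqxx.
    have Hyi : y \in models (B et) by rewrite Het !inE eqxx orbT.
    have Hzi : z \in models (B et) by rewrite Het !inE eqxx !orbT.
    case/set0Pn: (nab_ne hES nabla Phi et) => m Hm.
    have Hx : x \in models (B (nabla Phi et)).
      have Hmi := F1sub hF Hm; rewrite Het !inE in Hmi.
      case/orP: Hmi => [/orP [/eqP Em|/eqP Em]|/eqP Em]; subst m.
      + done.
      + exact: (lift hES hF Hm Hxi Hxy).
      + exact: (lift hES hF (lift hES hF Hm Hyi Hyz) Hxi Hxy).
    exact: (down hES hF Hx Hzi).
  - move=> Phi Psi Heq w w'; have [ep Hep] := pairE hES w w'.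
    rewrite (Aof_iff hF Phi Hep) (Aof_iff hF Psi Hep).
    have H2 : fequiv (B ep) (B ep) by apply/fequivP.
    by have /fequivP -> := hF.2.1 Phi Psi ep ep Heq H2.
  - move=> Phi e w; split.
      move=> Hw; split; first exact: (F1sub hF Hw).
      move=> x Hx; exact: (down hES hF Hw Hx).
    case=> Hw Hall; case/set0Pn: (nab_ne hES nabla Phi e) => m Hm.
    exact: (lift hES hF Hm Hw (Hall m (F1sub hF Hm))).
  - move=> A' [tot _] rep' Phi w w'; have [ep Hep] := pairE hES w w'.
    rewrite (Aof_iff hF Phi Hep) rep' /maxset Hep; split.
      move=> H; split; first by rewrite !inE eqxx.
      move=> x /set2P [->|->] //.
      by case: ((tot Phi).1 w w).
    by case=> _; apply; rewrite !inE eqxx orbT.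
split; [|split; [|split]].
- by move=> Phi e; apply/entailsP/subsetP => w /rep [].
- move=> Phi Phi' e e' Heq /fequivP He; apply/fequivP; apply/setP => w.
  apply/idP/idP => /rep [H1 H2]; apply/rep; split.
  + by rewrite -He.
  + by move=> x Hx; apply/(inv _ _ Heq); apply: H2; rewrite He.
  + by rewrite He.
  + by move=> x Hx; apply/(inv _ _ Heq); apply: H2; rewrite -He.
- move=> Phi e e' e'' /fequivP He; apply/entailsP/subsetP => w.
  rewrite models_and => /setIP [/rep [H1 H2] H3]; apply/rep; rewrite He models_and.
  split; first by apply/setIP.
  by move=> x /setIP [Hx _]; exact: H2.
- move=> Phi e e' e'' /fequivP He /consistentP; rewrite models_and.
  case/set0Pn => u /setIP [Hu Hu''].
  apply/entailsP/subsetP => w /rep [Hw Hall]; rewrite models_and.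
  move: Hw; rewrite He models_and => /setIP [Hw' Hw''].
  apply/setIP; split => //.
  have [Hu' Hallu] := (rep Phi e' u).1 Hu.
  have Hwu : A Phi w u by apply: Hall; rewrite He models_and; apply/setIP.
  apply/rep; split => // x Hx.
  exact: (assn Phi).2 _ _ _ Hwu (Hallu x Hx).
Qed.
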